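(* Let $r \in \mathbb{Z}_{\geqslant 1}$. For any real $x \geqslant 1$, $$\sum_{m \leqslant x} 2^{\omega(m)} \sum_{\substack{n \leqslant x/m \\ (m, \gamma(n)) = 1}} r^{\omega(n)} = \sum_{m \leqslant x} (r+2)^{\omega(m)}.$$
   Context: $\omega(n)$ is the number of distinct prime factors of $n$ and $\gamma(n) := \prod_{p \mid n} p$ is the squarefree kernel of $n$ (with $\gamma(1)=1$). Sums run over positive integers. *)

(* Defs.v *)
From mathcomp Require Import all_boot all_order all_algebra.
Set Implicit Arguments. Unset Strict Implicit. Unset Printing Implicit Defensive.
Import Order.TTheory GRing.Theory Num.Theory.

Definition omega (n : nat) : nat := size (primes n).

Definition gamma (n : nat) : nat := \prod_(p <- primes n) p.

(* Main.v *)
Require Import Defs.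
From mathcomp Require Import all_boot all_order all_algebra.
From mathcomp Require Import zify.
Import Order.TTheory GRing.Theory Num.Theory.

Lemma unitary_sum (r N k : nat) : 0 < k -> k <= N ->
  \sum_(m < N.+1 | (m %| k) && coprime m (k %/ m))
     2 ^ omega m * r ^ omega (k %/ m) = (r + 2) ^ omega k.
Proof.
move=> kpos kN.
pose s := primes k; pose w := size s.
pose pri (i : 'I_w) := nth 0 s i.
pose piJ (J : {set 'I_w}) : nat_pred := [pred p | [exists i in J, pri i == p]].
have prij : forall J i, (pri i \in piJ J) = (i \in J).
  move=> J i; rewrite inE /=; apply/existsP/idP => [[j /andP[jJ /eqP e]]|iJ].
    have ej : j = i.
      apply/val_inj/eqP; rewrite -(nth_uniq 0 (ltn_ord j) (ltn_ord i) (primes_uniq k)).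
      by apply/eqP.
    by rewrite -ej.
  by exists i; rewrite iJ eqxx.
have cntJ : forall J, count (piJ J) s = #|J|.
  move=> J; rewrite -sum1_count (big_nth 0) big_mkord -sum1_card.
  by apply: eq_bigl => i; rewrite -prij.
have partpos : forall pi : nat_pred, 0 < k`_pi by move=> pi; apply: part_gt0.
have partle : forall pi : nat_pred, k`_pi < N.+1.
  by move=> pi; rewrite ltnS (leq_trans _ kN) // dvdn_leq // dvdn_part.
have divpart : forall pi : nat_pred, k %/ k`_pi = k`_pi^'.
  by move=> pi; rewrite -{1}(partnC pi kpos) mulKn.
have omp : forall pi : nat_pred, omega k`_pi = count pi s.
  by move=> pi; rewrite /omega primes_part size_filter.
pose h (J : {set 'I_w}) : 'I_N.+1 := inord (k`_(piJ J)).
have hE : forall J, (h J : nat) = k`_(piJ J) by move=> J; rewrite /h inordK.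
pose h' (m : 'I_N.+1) : {set 'I_w} := [set i | pri i %| m].
have primk : forall i, pri i \in primes k by move=> i; apply: mem_nth.
rewrite (reindex_onto h h'); last first.
  move=> m /andP[mk cop].
  have mpos : 0 < m.
    by case: (posnP m) mk => // ->; rewrite dvd0n => /eqP k0; rewrite k0 in kpos.
  have mpos' : 0 < k %/ m by rewrite divn_gt0 // dvdn_leq.
  apply/val_inj => /=; rewrite /h inordK //.

  have eqpi : piJ (h' m) =i \pi(m).
    move=> p; rewrite [p \in piJ _]inE /=; apply/existsP/idP.
      move=> [i /andP[iJ /eqP <-]]; rewrite inE in iJ.
      have := primk i; rewrite !mem_primes => /and3P[pp _ _].
      by rewrite pp mpos iJ.
    rewrite mem_primes => /and3P[pp _ pm].
    have : p \in primes k by rewrite mem_primes pp kpos (dvdn_trans pm mk).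
    move=> /(nthP 0)[i ilt ie].
    exists (Ordinal ilt); rewrite inE /pri /= ie eqxx andbT; exact: pm.
  rewrite (eq_partn _ eqpi) -{1}(divnK mk) partnM // (part_pnat_id (pnat_pi mpos)).
  by rewrite part_p'nat ?mul1n // -coprime_pi'.
rewrite (eq_bigl (fun _ => true)); last first.
  move=> J; rewrite hE dvdn_part divpart coprime_partC /=.
  apply/eqP/setP => i; rewrite inE hE -prij.
  have := primk i; rewrite mem_primes => /and3P[pp _ _].
  transitivity (pri i \in primes k`_(piJ J)); first by rewrite mem_primes pp partpos.
  by rewrite primes_part mem_filter primk andbT.
have cntC : forall J, count (piJ J)^' s = w - #|J|.
  move=> J; have := count_predC (piJ J) s; rewrite cntJ => e.
  have -> : count (piJ J)^' s = count (predC (piJ J)) s by apply: eq_count.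
  move: e; rewrite /w; lia.
under eq_bigr => J _ do rewrite hE divpart !omp cntJ cntC.
have -> : omega k = #|'I_w| by rewrite card_ord.
rewrite -prod_nat_const addnC bigA_distr.
apply: eq_bigr => J _.
rewrite (bigID (mem J)) /=.
rewrite (eq_bigr (fun _ => 2)); last by move=> i ->.
rewrite [X in _ = _ * X](eq_bigr (fun _ => r)); last by move=> i /negbTE ->.
rewrite !prod_nat_const; congr (_ * _ ^ _).
have := cardC (mem J); rewrite card_ord => e.
have -> : #|[pred i : 'I_w | i \notin J]| = #|predC (mem J)| by apply: eq_card.
have e2 : #|J| + #|predC (mem J)| = w := e.
apply/eqP; rewrite eq_sym -(eqn_add2l #|J|) subnKC ?e2 //.
by rewrite -[leqRHS]e2 leq_addr.
Qed.

Lemma inord_val' (N k : nat) : ((inord k : 'I_N.+1) : nat) = if k < N.+1 then k else 0.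
Proof.
rewrite /inord /insubd; case: insubP => [u -> /= -> //|/negbTE -> //].
Qed.

Lemma coprime_gamma m n : 0 < m -> 0 < n -> coprime m (gamma n) = coprime m n.
Proof.
move=> mp np.
have E : forall s, coprime m (\prod_(p <- s) p) = all (coprime m) s.
  by elim=> [|p s IH]; rewrite ?big_nil ?big_cons ?coprimen1 // coprimeMr IH.
rewrite /gamma E coprime_has_primes // -all_predC.
apply: eq_in_all => p; rewrite mem_primes => /and3P[pp _ _] /=.
by rewrite coprime_sym prime_coprime // mem_primes pp mp.
Qed.

Lemma main_nat (r N : nat) :
  \sum_(m < N.+1 | 0 < m)
     \sum_(n < N.+1 | [&& 0 < n, n * m <= N & coprime m n]) 2 ^ omega m * r ^ omega n
  = \sum_(k < N.+1 | 0 < k) (r + 2) ^ omega k.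
Proof.
rewrite [RHS](eq_bigr (fun k : 'I_N.+1 => \sum_(m < N.+1 | (m %| k) && coprime m (k %/ m))
     2 ^ omega m * r ^ omega (k %/ m))); last first.
  by move=> k kp; rewrite unitary_sum // -ltnS.
rewrite [RHS](exchange_big_dep (fun m : 'I_N.+1 => 0 < m)) /=; last first.
  move=> k m kp /andP[mk _]; case: (posnP m) mk => // ->.

  by rewrite dvd0n => /eqP k0; rewrite k0 in kp.
apply: eq_bigr => m mp.
pose h (n : 'I_N.+1) : 'I_N.+1 := inord (n * m).
pose h' (k : 'I_N.+1) : 'I_N.+1 := inord (k %/ m).
rewrite [RHS](reindex_onto h h'); last first.
  move=> k /and3P[kp mk _]; apply/val_inj; rewrite /h /h' /=.
  have km : k %/ m < N.+1 by rewrite (leq_ltn_trans (leq_div _ _)).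
  by rewrite (inordK km) divnK // inordK.
apply: eq_big => n.
  rewrite /h /h' inord_val'.
  case: (ltnP (n * m) N.+1) => nm /=.
    rewrite mulnK // dvdn_mull // inord_val eqxx andbT.
    by rewrite ltnS in nm; rewrite muln_gt0 mp andbT nm.
  by rewrite [n * m <= N]leqNgt nm andbF.
move=> /andP[] _ /andP[nm _].
by rewrite /h inord_val' ltnS nm mulnK.
Qed.

Local Open Scope ring_scope.

Theorem lemma4p3 (R : archiRealFieldType) (r : nat) (x : R) :
  (1 <= r)%N -> 1 <= x ->
  \sum_(m < (Num.truncn x).+1 | (0 < (m : nat))%N && ((m%:R : R) <= x))
      muln (2 ^ omega m)%N
       (\sum_(n < (Num.truncn x).+1 |
              [&& (0 < (n : nat))%N, (n%:R : R) <= x / m%:R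
                & coprime m (gamma n)])
         (r ^ omega n)%N)
  = \sum_(m < (Num.truncn x).+1 | (0 < (m : nat))%N && ((m%:R : R) <= x))
      ((r + 2) ^ omega m)%N.
Proof.
move=> r1 x1; have x0 : 0 <= x := le_trans ler01 x1.
have ordx : forall k : 'I_(Num.truncn x).+1, (k%:R <= x) = true.
  by move=> k; rewrite -truncn_ge_nat // -ltnS ltn_ord.
under [RHS]eq_bigl => k do rewrite ordx andbT.
rewrite -main_nat.
apply: eq_big => [m|m mp]; first by rewrite ordx andbT.
move/andP: mp => [mp _].

rewrite big_distrr /=; apply: eq_bigl => n.
case: (posnP n) => [-> //|np] /=.
rewrite ler_pdivlMr; last by rewrite ltr0n.
rewrite -(natrM R) -truncn_ge_nat // coprime_gamma //.
Qed.
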